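(* For every integer $k\ge2$ and every item sequence $I\in(0,1]^n$, $NFD_k(I)\le\lambda_k\cdot OPT_k(I)+k$.
   Context: Define $\pi_1=2$, $\pi_{i+1}=\pi_i(\pi_i-1)+1$ for $i\ge1$, and $\lambda_j=\sum_{i=1}^j\max\{\frac{1}{\pi_i-1},\frac1j\}$ for $j\ge1$. The $k$-cardinality constrained bin packing problem: an item sequence $I\in(0,1]^n$ must be packed into bins of capacity $1$ with at most $k$ items per bin; $OPT_k(I)$ is the minimum number of non-empty bins, $ALG(I)$ the number used by $ALG$. Algorithm $NFD_k$: sort the items in non-increasing order, then process them in this order with a single open bin: pack the current item into the open bin if it fits (load stays $\le1$) and the bin contains fewer than $k$ items; otherwise close the open bin permanently and pack the item into a new bin. *)

(* Defs.v *)
From HB Require Import structures.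
From mathcomp Require Import all_boot all_order all_algebra.
From mathcomp Require Import reals.
Set Implicit Arguments. Unset Strict Implicit. Unset Printing Implicit Defensive.
Import Order.TTheory GRing.Theory Num.Theory.
Local Open Scope ring_scope.

(* Sylvester sequence: sylv i = pi_{i+1}; pi_1 = 2, pi_{i+1} = pi_i (pi_i - 1) + 1 *)
Fixpoint sylv (i : nat) : nat :=
  match i with
  | 0 => 2
  | i'.+1 => (sylv i' * (sylv i' - 1) + 1)%N
  end.

Definition piS (i : nat) : nat := sylv i.-1.

Definition lambda (R : realFieldType) (j : nat) : R :=
  \sum_(1 <= i < j.+1) Num.max (1 / ((piS i - 1)%:R)) (1 / j%:R).

(* Next Fit with one open bin of current load [load] containing [cnt] items;
   returns the number of additional bins opened while processing [s]. *)
Fixpoint nf_aux (R : realFieldType) (k : nat) (load : R) (cnt : nat) (s : seq R)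
  : nat :=
  match s with
  | [::] => 0%N
  | x :: s' =>
      if (load + x <= 1) && (cnt < k)%N
      then nf_aux k (load + x) cnt.+1 s'
      else (nf_aux k x 1 s').+1
  end.

Definition NF (R : realFieldType) (k : nat) (s : seq R) : nat :=
  match s with
  | [::] => 0%N
  | x :: s' => (nf_aux k x 1 s').+1
  end.

Definition NFD (R : realFieldType) (k : nat) (I : seq R) : nat :=
  NF k (sort (fun x y : R => y <= x) I).

(* A packing of the items of I: item i goes to bin f i; there are at most
   size I non-empty bins, so bins are indexed by 'I_(size I) w.l.o.g. *)
Definition feasible (R : realFieldType) (k : nat) (I : seq R)
  (f : {ffun 'I_(size I) -> 'I_(size I)}) : bool :=
  [forall b : 'I_(size I),
     (\sum_(i : 'I_(size I) | f i == b) nth 0 I i <= 1)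
     && (#|[set i : 'I_(size I) | f i == b]| <= k)%N].

Definition nbins (n : nat) (f : {ffun 'I_n -> 'I_n}) : nat :=
  #|[set f i | i : 'I_n]|.

(* OPT_k(I): minimum number of non-empty bins over all feasible packings
   (the default value size I is attained by the trivial packing when k >= 1). *)
Definition OPT (R : realFieldType) (k : nat) (I : seq R) : nat :=
  \big[minn/size I]_(f : {ffun 'I_(size I) -> 'I_(size I)} | @feasible R k I f)
     nbins f.

(* Main.v *)
From HB Require Import structures.
From mathcomp Require Import all_boot all_order all_algebra.
From mathcomp Require Import lra ring zify.
From mathcomp Require Import reals.
Require Import Defs.
Import Order.TTheory GRing.Theory Num.Theory.
Lemma maxn_or (a b : nat) : maxn a b = a \/ maxn a b = b.
Proof. by rewrite /maxn; case: ifP; auto. Qed.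

Local Open Scope ring_scope.
Set Implicit Arguments. Unset Strict Implicit.

Section W.
Variable R : realFieldType.
Variable k : nat.

Definition dd (x : R) : nat := \max_(c < k.+1 | c%:R * x <= 1) c.
Definition W (x : R) : R := (dd x)%:R^-1.

Lemma dd_le x : (dd x <= k)%N.
Proof. by apply/bigmax_leqP => i _; rewrite -ltnS. Qed.

Lemma dd_mul x : (dd x)%:R * x <= 1.
Proof.
rewrite /dd; apply: (big_ind (fun v : nat => v%:R * x <= 1)).
- by rewrite mul0r ler01.
- by move=> a b Ha Hb; case: (maxn_or a b) => ->.
- by [].
Qed.

Lemma dd_max x c : (c <= k)%N -> c%:R * x <= 1 -> (c <= dd x)%N.
Proof.
move=> ck cx; rewrite /dd.
have := @leq_bigmax_cond _ (fun i : 'I_k.+1 => i%:R * x <= 1) (fun i : 'I_k.+1 => val i) (Ordinal (ck : c < k.+1)%N).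
by apply.
Qed.

Lemma dd_ge1 x : (1 <= k)%N -> x <= 1 -> (1 <= dd x)%N.
Proof. by move=> k1 x1; apply: dd_max => //; rewrite mul1r. Qed.

Lemma dd_anti x x' : 0 <= x' - x -> (dd x' <= dd x)%N.
Proof.
move=> h; apply: dd_max; first exact: dd_le.
apply: le_trans (dd_mul x').
have : 0 <= (dd x')%:R * (x' - x) by apply: mulr_ge0.
rewrite mulrBr; lra.
Qed.

Lemma dd_gt x : (dd x < k)%N -> 1 < (dd x).+1%:R * x.
Proof.
move=> h; rewrite ltNge; apply/negP => H.
by have := dd_max h H; rewrite ltnn.
Qed.

Lemma dd_small x g : 1 < g.+1%:R * x -> (dd x <= g)%N.
Proof.
move=> h; rewrite leqNgt; apply/negP => H.
have : g.+1%:R * x <= (dd x)%:R * x.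
  apply: ler_wpM2r; last by rewrite ler_nat.
  rewrite le_eqVlt; apply/orP; right.
  by rewrite -(pmulr_rgt0 _ (ltr0Sn _ g)); apply: lt_trans h.
move: (dd_mul x) h; lra.
Qed.

Hypothesis k1 : (1 <= k)%N.

Lemma W_pos x : x <= 1 -> 0 < W x.
Proof. by move=> x1; rewrite /W invr_gt0 ltr0n (dd_ge1 k1 x1). Qed.

Lemma W_ge x : x <= 1 -> k%:R^-1 <= W x.
Proof.
move=> x1; rewrite /W lef_pV2 ?posrE ?ltr0n ?(dd_ge1 k1 x1) //.
by rewrite ler_nat dd_le.
Qed.

Lemma W_le1 x : x <= 1 -> W x <= 1.
Proof.
move=> x1; rewrite /W invr_le1 ?unitfE ?pnatr_eq0 ?ltr0n -?lt0n ?(dd_ge1 k1 x1) //.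
by rewrite ler1n (dd_ge1 k1 x1).
Qed.

Lemma W_mono x x' : x <= x' -> x' <= 1 -> W x <= W x'.
Proof.
move=> h x1; have x11 : x <= 1 by apply: le_trans x1.
rewrite /W lef_pV2 ?posrE ?ltr0n ?(dd_ge1 k1 x1) ?(dd_ge1 k1 x11) //.
by rewrite ler_nat dd_anti // subr_ge0.
Qed.

Lemma W_kge x : x <= 1 -> 1 <= k%:R * W x.
Proof.
move=> x1; have := W_ge x1; have kp : 0 < k%:R :> R by rewrite ltr0n.
move=> h; apply: le_trans (ler_wpM2l (ltW kp) h).
by rewrite mulfV // gt_eqF.
Qed.

Lemma W_gge x g : x <= 1 -> (1 <= g)%N -> 1 < g.+1%:R * x -> 1 <= g%:R * W x.
Proof.
move=> x1 g1 h; have gp : 0 < g%:R :> R by rewrite ltr0n.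
have : g%:R^-1 <= W x.
  rewrite /W lef_pV2 ?posrE ?ltr0n ?(dd_ge1 k1 x1) //.
  by rewrite ler_nat dd_small.
move=> h2; apply: le_trans (ler_wpM2l (ltW gp) h2).
by rewrite mulfV // gt_eqF.
Qed.

End W.
Lemma sylv_ge2 i : (2 <= sylv i)%N.
Proof. elim: i => [//|i IH] /=. nia. Qed.

Section L.
Variable R : realFieldType.
Definition sq i : R := (sylv i)%:R.
Definition T i : R := (sq i - 1)^-1.

Lemma sq_ge2 i : 2 <= sq i.
Proof. by rewrite /sq (ler_nat R 2) sylv_ge2. Qed.

Lemma sq_rec i : sq i.+1 - 1 = sq i * (sq i - 1).
Proof.
rewrite /sq /= natrD natrM natrB; last by have := sylv_ge2 i; lia.
by rewrite addrK.
Qed.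

Lemma T_ge0 i : 0 <= T i.
Proof. by rewrite /T invr_ge0; have := sq_ge2 i; lra. Qed.

Lemma T_rec i : T i.+1 = T i - (sq i)^-1.
Proof.
rewrite /T sq_rec; have h := sq_ge2 i.
field. apply/andP; split; apply/eqP; lra.
Qed.

Lemma T_two i : (sq i + 1) / (sq i) * T i = T i + T i.+1.
Proof.
rewrite T_rec /T; have h := sq_ge2 i.
field. apply/andP; split; apply/eqP; lra.
Qed.

Lemma PT (A x : R) : 2 <= A -> A <= x -> (x - 1)^-1 <= A / (A - 1) * x^-1.
Proof.
move=> hA hx.
have h1 : 0 < x - 1 by lra.
have h2 : 0 < A - 1 by lra.
have h3 : 0 < x by lra.
rewrite -mulrA -invfM.
rewrite ler_pdivlMr ?mulr_gt0 //.
rewrite mulrC ler_pdivrMr //.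
by rewrite mulrBl mulrBr mul1r mulr1 lerD2l lerN2.
Qed.

Lemma sum_inv_ge0 (a : seq nat) : 0 <= \sum_(x <- a) (x%:R : R)^-1.
Proof. by apply: sumr_ge0 => x _; rewrite invr_ge0 ler0n. Qed.

Lemma lemL n (a : seq nat) t : size a = n -> all (fun x => 2 <= x)%N a ->
  \sum_(x <- a) (x%:R : R)^-1 < T t ->
  \sum_(x <- a) (x%:R - 1)^-1 <= \sum_(t <= i < t + size a) T i.
Proof.
elim: n a t => [|n IH] a t Hn ha hs.
  by case: a Hn ha hs => // _ _ _; rewrite big_nil addn0 big_geq.
case: (boolP (sylv t \in a)) => Hin.
  have P := perm_to_rem Hin.
  move: hs; rewrite (perm_big _ P) big_cons /= => hs.
  rewrite (perm_big _ P) big_cons /=.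
  have Hrem : size (rem (sylv t) a) = n by rewrite size_rem // Hn.
  have ha' : all (fun x => 2 <= x)%N (rem (sylv t) a).
    by apply/allP => x hx; apply: (allP ha); apply: (mem_rem hx).
  have hs' : \sum_(x <- rem (sylv t) a) (x%:R : R)^-1 < T t.+1.
    rewrite T_rec; move: hs; rewrite -/(sq t); lra.
  have := IH _ _ Hrem ha' hs'.
  rewrite Hn big_ltn; last by lia.
  rewrite -/(sq t) -/(T t) Hrem addSnnS => H.
  by rewrite lerD2l.
have Hge : forall x, x \in a -> (sylv t < x)%N.
  move=> x hx.
  have P := perm_to_rem hx.
  move: hs; rewrite (perm_big _ P) big_cons /= => hs.
  have h0 := sum_inv_ge0 (rem x a).
  have hx2 : (2 <= x)%N := allP ha x hx.
  have hxR : 2 <= (x%:R : R) by rewrite (ler_nat R 2).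
  have hlt : (x%:R : R)^-1 < T t by lra.
  have hst : sq t - 1 < x%:R.
    rewrite ltNge; apply/negP => hle.
    have := sq_ge2 t => hq.
    move: hlt; rewrite /T ltNge => /negP; apply.
    by rewrite lef_pV2 ?posrE //; lra.
  have : (sylv t < x.+1)%N.
    by rewrite -(ltr_nat R) -addn1 natrD -/(sq t); lra.
  rewrite ltnS leq_eqVlt => /orP [/eqP E|//].
  by move: Hin; rewrite E hx.
case: a Hn ha hs Hin Hge => [//|x1 [|x2 r]] Hn ha hs Hin Hge.
  rewrite /= addn1 big_ltn // big_geq // big_cons big_nil addr0 /T.
  have h1 := Hge x1 (mem_head _ _).
  have hq := sq_ge2 t.
  have : sq t + 1 <= x1%:R by rewrite /sq natr1 ler_nat.
  move=> h.
  rewrite addr0 lef_pV2 ?posrE; lra.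
set A := sq t + 1.
have hA : 2 <= A by have := sq_ge2 t; rewrite /A; lra.
apply: (le_trans (y := \sum_(x <- [:: x1, x2 & r]) A / (A - 1) * (x%:R)^-1)).
  rewrite big_seq_cond [X in _ <= X]big_seq_cond.
  apply: ler_sum => x /andP [hx _]; apply: PT => //.
  by rewrite /A /sq natr1 ler_nat; apply: Hge.
rewrite -mulr_sumr.
apply: (le_trans (y := A / (A - 1) * T t)).
  rewrite ler_wpM2l ?ltW //.
  apply: divr_gt0; lra.
have -> : A / (A - 1) = (sq t + 1) / sq t by rewrite /A addrK.
rewrite T_two /= big_ltn; last by lia.
rewrite big_ltn; last by lia.
rewrite addrA lerDl; apply: sumr_ge0 => i _; exact: T_ge0.
Qed.
End L.

Section Bin.
Variable R : realFieldType.
Variable k : nat.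
Hypothesis k1 : (1 <= k)%N.

Definition M i : R := Num.max (T R i) (k%:R^-1).

Lemma M_ge0 i : 0 <= M i.
Proof. by rewrite /M le_max T_ge0. Qed.

Lemma lam_eq : lambda R k = \sum_(0 <= i < k) M i.
Proof.
rewrite /lambda big_add1 /=; apply: eq_bigr => i _.
rewrite /M /T /piS /sq /= !div1r natrB //; by have := sylv_ge2 i; lia.
Qed.

Lemma lam_ge1 : 1 <= lambda R k.
Proof.
rewrite lam_eq big_ltn // /M /T /sq /=.
have h : 1 <= Num.max ((2%:R : R) - 1)^-1 k%:R^-1.
  have e : (2%:R : R) - 1 = 1 by rewrite -natr1 addrK.
  by rewrite le_max e invr1 lexx.
apply: le_trans h _; rewrite lerDl; apply: sumr_ge0 => i _; exact: M_ge0.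
Qed.

Lemma sum_const_count (I : Type) (s : seq I) (P : pred I) (c : R) :
  \sum_(x <- s | P x) c = c *+ count P s.
Proof.
elim: s => [|x s IH]; first by rewrite big_nil.
by rewrite big_cons IH /=; case: (P x); rewrite ?mulrS ?add0n.
Qed.

Lemma bin_bound (t : seq R) :
  all (fun x => (0 < x) && (x <= 1)) t -> (size t <= k)%N ->
  \sum_(x <- t) x <= 1 -> \sum_(x <- t) W k x <= lambda R k.
Proof.
move=> ht hsz hsum.
have hx1 : forall x, x \in t -> x <= 1 by move=> x /(allP ht) /andP [].
have hx0 : forall x, x \in t -> 0 < x by move=> x /(allP ht) /andP [].
set P := (fun x : R => (dd k x < k)%N).
rewrite (bigID P) /=.
set n1 := count P t. set n2 := count (predC P) t.
have e2 : \sum_(x <- t | ~~ P x) W k x = k%:R^-1 *+ n2.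
  rewrite -sum_const_count big_seq_cond [RHS]big_seq_cond; apply: eq_bigr => x /andP [hx hP].
  rewrite /W; congr (_^-1); congr (_%:R); apply/eqP; rewrite eqn_leq dd_le /=.
  by rewrite leqNgt.
set a := [seq (dd k x).+1 | x <- t & P x].
have e1 : \sum_(x <- t | P x) W k x = \sum_(y <- a) (y%:R - 1)^-1.
  by rewrite big_map big_filter; apply: eq_bigr => x _; rewrite /W -natr1 addrK.
have ha : all (fun x => 2 <= x)%N a.
  apply/allP => y /mapP [x hx ->]; rewrite ltnS dd_ge1 //.
  by apply: hx1; move: hx; rewrite mem_filter => /andP [].
have hs : \sum_(y <- a) (y%:R : R)^-1 < T R 0.
  have -> : T R 0 = 1 by rewrite /T /sq /= -natr1 addrK invr1.
  rewrite big_map big_filter.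
  case: (boolP (has P t)) => hh; last by rewrite big_hasC.
  apply: (lt_le_trans (y := \sum_(x <- t | P x) x)).
    rewrite big_seq_cond [X in _ < X]big_seq_cond; apply: ltr_sum.
      by case/hasP: hh => x hx hP; apply/hasP; exists x => //; rewrite hx.
    move=> x /andP [hx hP]; rewrite -div1r ltr_pdivrMr ?ltr0Sn // mulrC.
    exact: dd_gt.
  apply: le_trans hsum; rewrite [X in _ <= X](bigID P) /= lerDl.
  by rewrite big_seq_cond; apply: sumr_ge0 => x /andP [hx _]; apply: ltW; apply: hx0.
have L := lemL (erefl (size a)) ha hs.
have sa : size a = n1 by rewrite size_map size_filter.
rewrite e1 e2 lam_eq.
have hn : (n1 + n2 <= k)%N by rewrite count_predC.
rewrite (big_cat_nat _ (n := n1 + n2)) //=.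
rewrite (big_cat_nat _ (n := n1) (m := 0)) //=; last by rewrite leq_addr.
rewrite -addrA; apply: lerD.
  apply: le_trans L _; rewrite sa add0n; apply: ler_sum => i _; rewrite /M le_max lexx //.
rewrite -[X in X <= _]addr0; apply: lerD; last by apply: sumr_ge0 => i _; exact: M_ge0.
rewrite -{1}(addKn n1 n2) -sumr_const_nat; apply: ler_sum => i _.
by rewrite /M le_max lexx orbT.
Qed.
End Bin.

Section NF.
Variable R : realFieldType.

Lemma nf_bound (k : nat) (s : seq R) L c y Y w pw g :
 (1 <= k)%N -> path (fun a b : R => b <= a) y s -> y <= Y -> Y <= 1 ->
 (1 <= c)%N -> (c <= k)%N -> c%:R * y <= L -> L <= 1 -> L <= c%:R * Y ->
 c%:R * W k y <= w -> (g <= k)%N -> g%:R * Y <= 1 -> g%:R * W k Y <= pw ->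
 (nf_aux k L c s + 2)%:R <= \sum_(x <- s) W k x + w + pw + (k%:R - g%:R) + 1.
Proof.
elim: s L c y Y w pw g => [|z s IH] L c y Y w pw g k1 hp hyY hY1 hc1 hck hcy hL1 hLY hw hg hgY hpw /=.
all: have hy1 : y <= 1 by apply: le_trans hY1.
all: have Wy := W_pos k1 hy1.
all: have WY := W_pos k1 hY1.
all: have pw0 : 0 <= pw by apply: le_trans hpw; apply: mulr_ge0 => //; apply: ltW.
all: have w0 : 0 <= w by apply: le_trans hw; apply: mulr_ge0 => //; apply: ltW.
all: have kk : g = k -> 1 <= pw by move=> e; apply: le_trans hpw; rewrite e; apply: W_kge.
  rewrite big_nil add0r.
  case: (ltnP g k) => hgk.
    have : g.+1%:R <= k%:R :> R by rewrite ler_nat.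
    rewrite -natr1; lra.
  have e : g = k by apply/eqP; rewrite eqn_leq hg hgk.
  have := kk e; rewrite e; lra.
move: hp => /andP [hzy hp].
have hzY : z <= Y by apply: le_trans hyY.
have hz1 : z <= 1 by apply: le_trans hy1.
have c0 : 0 <= c%:R :> R by rewrite ler0n.
rewrite big_cons.
case: ifP => hfit.
  move: hfit => /andP [hfit hck'].
  have := IH (L + z) c.+1 z Y (w + W k z) pw g k1 hp hzY hY1 (ltn0Sn _) hck'.
  have h1 : c%:R * z <= c%:R * y by apply: ler_wpM2l.
  have h2 : c%:R * W k z <= c%:R * W k y by apply: ler_wpM2l => //; apply: W_mono.
  rewrite -!natr1 !mulrDl !mul1r.
  move=> H; have := H ltac:(lra) hfit ltac:(lra) ltac:(lra) hg hgY hpw.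
  lra.
have := IH z 1%N z y (W k z) w c k1 hp hzy hy1 (leqnn 1) k1.
rewrite !mul1r => H.
have H' := H ltac:(lra) hz1 hzy ltac:(lra) hck ltac:(lra) hw.
have key : g%:R + 1 <= pw + c%:R.
  case: (ltnP g c) => hgc.
    have : g.+1%:R <= c%:R :> R by rewrite ler_nat.
    rewrite -natr1; lra.
  case: (ltnP c k) => hck2.
    move: hfit; rewrite hck2 andbT => /negbT; rewrite -ltNge => hfit.
    have hcY : 1 < c.+1%:R * Y by rewrite -natr1 mulrDl mul1r; lra.
    have Y0 : 0 < Y by rewrite -(pmulr_rgt0 _ (ltr0Sn _ c)); apply: lt_trans hcY.
    have e : c = g.
      apply/eqP; rewrite eqn_leq hgc /= leqNgt; apply/negP => hcg.
      have : c.+1%:R * Y <= g%:R * Y by apply: ler_wpM2r; [apply: ltW | rewrite ler_nat].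
      lra.
    subst c.
    have := W_gge k1 hY1 hc1 hcY.
    lra.
  have e1 : c = k by apply/eqP; rewrite eqn_leq hck hck2.
  have e2 : g = k by apply/eqP; rewrite eqn_leq hg; rewrite -{1}e1 hgc.
  have := kk e2; rewrite e1 e2; lra.
have -> : ((nf_aux k z 1 s).+1 + 2 = (nf_aux k z 1 s + 2) + 1)%N by rewrite addSn addn1.
rewrite natrD; lra.
Qed.
End NF.
Lemma minn_or' (a b : nat) : minn a b = a \/ minn a b = b.
Proof. by rewrite /minn; case: ifP; auto. Qed.

Lemma OPT_cases (R : realFieldType) k (I : seq R) :
  OPT k I = size I \/ exists2 f, @feasible R k I f & OPT k I = nbins f.
Proof.
rewrite /OPT; apply: (big_ind (fun v => v = size I \/ exists2 f, @feasible R k I f & v = nbins f)).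
- by left.
- by move=> x y Hx Hy; case: (minn_or' x y) => ->.
- by move=> f hf; right; exists f.
Qed.

Lemma bin_conv (R : realFieldType) (n : nat) (f : {ffun 'I_n -> 'I_n}) (b : 'I_n) (G : 'I_n -> R) :
  \sum_(i | f i == b) G i = \sum_(i <- enum [pred i | f i == b]) G i.
Proof. by rewrite big_enum /=; apply: eq_bigl => i; rewrite !inE. Qed.

Lemma card_conv (n : nat) (f : {ffun 'I_n -> 'I_n}) (b : 'I_n) :
  #|[set i : 'I_n | f i == b]| = size (enum [pred i | f i == b]).
Proof. by rewrite cardsE cardE. Qed.

Lemma sumW_opt (R : realFieldType) k (I : seq R) : (1 <= k)%N ->
  all (fun x : R => (0 < x) && (x <= 1)) I ->
  \sum_(x <- I) W k x <= lambda R k * (OPT k I)%:R.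
Proof.
move=> k1 hI.
have hx1 : forall x, x \in I -> x <= 1 by move=> x /(allP hI) /andP [].
have lam1 := lam_ge1 R k1.
case: (OPT_cases k I) => [->|[f hf ->]].
  apply: (le_trans (y := \sum_(x <- I) (1 : R))).
    by rewrite big_seq [X in _ <= X]big_seq; apply: ler_sum => x hx; apply: W_le1 => //; apply: hx1.
  rewrite (sum_const_count I xpredT) count_predT.
  rewrite -[X in X <= _]mul1r; apply: ler_wpM2r => //; exact: ler0n.
rewrite (big_nth 0) big_mkord.
rewrite (partition_big (fun i => f i) (mem [set f i | i : 'I_(size I)])) /=; last first.
  by move=> i _; apply: imset_f.
apply: (le_trans (y := \sum_(b in [set f i | i : 'I_(size I)]) lambda R k)).
  apply: ler_sum => b _.
  rewrite (bin_conv f b (fun i => W k (nth 0 I i))).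
  have -> : \sum_(i <- enum [pred i | f i == b]) W k (nth 0 I i) = \sum_(x <- [seq nth 0 I i | i : 'I_(size I) <- enum [pred i | f i == b]]) W k x by rewrite big_map.
  move: hf => /forallP /(_ b) /andP [hs hc].
  apply: bin_bound => //.
  - apply/allP => x /mapP [i _ ->]; apply: (allP hI); apply: mem_nth; exact: ltn_ord.
  - by rewrite size_map -card_conv.
  - by rewrite big_map -bin_conv.
rewrite sumr_const /nbins mulr_natr.
done.
Qed.

Lemma NFD_le (R : realFieldType) k (I : seq R) : (1 <= k)%N ->
  all (fun x : R => (0 < x) && (x <= 1)) I ->
  (NFD k I)%:R <= \sum_(x <- I) W k x + k%:R.
Proof.
move=> k1 hI.
have hx1 : forall x, x \in I -> x <= 1 by move=> x /(allP hI) /andP [].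
have tot : total (fun x y : R => y <= x) by move=> x y; rewrite orbC le_total.
have srt := sort_sorted tot I.
have P := permEl (perm_sort (fun x y : R => y <= x) I).
rewrite -(perm_big _ P) /NFD /NF.
move: srt (perm_mem P).
case: (sort _ I) => [|x s] srt hmem.
  rewrite big_nil add0r; exact: ler0n.
have hx : x <= 1 by apply: hx1; rewrite -hmem mem_head.
have := @nf_bound R k s x 1 x x (W k x) 0 0 k1 srt (lexx x) hx (leqnn 1) k1.
rewrite !mul1r mul0r subr0 => H.
have := H (lexx x) hx (lexx x) (lexx _) (leq0n k) ler01 ltac:(by rewrite mul0r).
rewrite big_cons natrD -[((nf_aux k x 1 s).+1)%:R]natr1 => H2.
have e : (2%:R : R) = 1 + 1 by rewrite -natr1.
rewrite /=; lra.
Qed.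

Theorem theorem11 (R : realType) (k : nat) (I : seq R) :
  (2 <= k)%N ->
  all (fun x : R => (0 < x) && (x <= 1)) I ->
  (NFD k I)%:R <= lambda R k * (OPT k I)%:R + k%:R.
Proof.
move=> k2 hI; have k1 : (1 <= k)%N by apply: ltnW.
apply: le_trans (NFD_le k1 hI) _.
by rewrite lerD2r; apply: sumW_opt.
Qed.
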